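(* Let $n>11$ and suppose $\mathcal{C}\subseteq S_n$ is a perfect single-error-correcting code with respect to the Kendall's $\tau$-distance. Let $r$ be a positive integer with $r<\frac{n}{4}$. Then for every sequence $i_1,i_2,\dots,i_r$ of $r$ distinct elements of $[n]$ and every choice of positions $1\leq j_1<j_2<\dots<j_r\leq n$, the number of codewords $\sigma\in\mathcal{C}$ satisfying $\sigma(j_\ell)=i_\ell$ for all $1\leq \ell\leq r$ is exactly $\frac{(n-r)!}{n}$.
   Context: $S_n$ denotes the set of all permutations of $[n]=\{1,\dots,n\}$, written $\sigma=[\sigma(1),\dots,\sigma(n)]$, where $\sigma(i)$ is the element in position $i$. An adjacent transposition applied to $\sigma$ exchanges the entries in positions $i$ and $i+1$ for some $1\leq i\leq n-1$. The Kendall's $\tau$-distance $d_K(\sigma,\pi)$ is the minimum number of adjacent transpositions needed to transform $\sigma$ into $\pi$. A perfect single-error-correcting code is a subset $\mathcal{C}\subseteq S_n$ such that every permutation of $S_n$ is at distance at most $1$ from exactly one element of $\mathcal{C}$. *)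

(* Defs.v *)
From mathcomp Require Import all_boot all_order all_fingroup.
Set Implicit Arguments. Unset Strict Implicit. Unset Printing Implicit Defensive.
Local Open Scope group_scope.

(* Permutations of [n] are modelled as 'S_n = {perm 'I_n}; positions and
   elements are 0-based: sigma p is the element in position p. *)

(* pi is obtained from sigma by one adjacent transposition: exchanging
   the entries in positions i and i+1.  The new permutation is
   p |-> sigma (tperm i (i+1) p), i.e. tperm i (i+1) * sigma in mathcomp's
   left-to-right composition. *)
Definition adj_step (n : nat) (sigma pi : 'S_n) : Prop :=
  exists (i j : 'I_n), j = i.+1 :> nat /\ pi = tperm i j * sigma.

Fixpoint reach (n : nat) (k : nat) (sigma pi : 'S_n) : Prop :=
  match k with
  | 0 => sigma = pi
  | k'.+1 => exists tau : 'S_n, adj_step sigma tau /\ reach k' tau pi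
  end.

Definition kendall_le (n : nat) (sigma pi : 'S_n) (k : nat) : Prop :=
  exists2 m, m <= k & reach m sigma pi.

Definition perfect_1code (n : nat) (C : {set 'S_n}) : Prop :=
  forall pi : 'S_n, exists! c : 'S_n, c \in C /\ kendall_le c pi 1.

(* Main.v *)
Require Import Defs.
From mathcomp Require Import all_boot all_order all_fingroup.
From mathcomp Require Import primitive_action alt.
From Stdlib Require Import Lia.
From mathcomp Require Import zify.

Lemma count_fix (n r : nat) (f v : 'I_r -> 'I_n) : injective f -> injective v ->
 #|[set s : 'S_n | [forall l, s (f l) == v l]]| = (n-r)`!.
Proof.
move=> injf injv.
pose to := (perm_action 'I_n * r)%act.
pose tf := [tuple f l | l < r]. pose tv := [tuple v l | l < r].
have dtf : tf \in r.-dtuple(setT).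
  by apply/dtuple_onP; split=> [a b|a]; rewrite ?inE // !tnth_mktuple => /injf.
have dtv : tv \in r.-dtuple(setT).
  by apply/dtuple_onP; split=> [a b|a]; rewrite ?inE // !tnth_mktuple => /injv.
have cr : #|dtuple_on r [set: 'I_n]| = n ^_ r.
  transitivity (#|(predT : pred (ordinal n))| ^_ r); last by rewrite card_ord.
  rewrite -card_uniq_tuples; apply: eq_card => t.
  by rewrite !inE all_predT; apply/andb_idr => _; apply/subsetP=> x; rewrite inE.
have rn : r <= n.
  rewrite -ffact_gt0 -cr; apply/card_gt0P; by exists tf.
have rI : r <= #|'I_n| by rewrite card_ord.
have tr := ntransitive_weak rI (Sym_trans 'I_n).
have [a _ ea] := atransP2 tr dtf dtv.
have -> : [set s : 'S_n | [forall l, s (f l) == v l]] = amove to (Sym_group 'I_n) tf tv.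
  apply/setP => s; rewrite !inE /= eqEtuple.
  apply/forallP/forallP => H l; move: (H l); by rewrite tnth_map !tnth_mktuple.
rewrite ea amove_act ?inE // card_rcoset.
have := card_orbit_stab to (Sym_group 'I_n) tf.
rewrite (atransP tr tf dtf) cr card_Sym card_ord -(ffact_fact rn).
move/eqP; rewrite eqn_mul2l => /orP[|/eqP //].
by rewrite -leqn0 leqNgt ffact_gt0 rn.
Qed.

Local Open Scope group_scope.

Definition tau {n : nat} (k : 'I_n) : 'S_n := tperm k (insubd k k.+1).
Definition Dset (n : nat) : {set option 'I_n} :=
  [set o : option 'I_n | if o is Some k then k.+1 < n else true].
Definition nb {n : nat} (c : 'S_n) (o : option 'I_n) : 'S_n :=
  if o is Some k then tau k * c else c.
Definition act {n r : nat} (o : option 'I_n) (f : {ffun 'I_r -> 'I_n}) : {ffun 'I_r -> 'I_n} :=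
  [ffun l => if o is Some k then tau k (f l) else f l].

Lemma ball_iff (n : nat) (c p : 'S_n) :
  kendall_le c p 1 <-> exists2 o, o \in Dset n & p = nb c o.
Proof.
split.
- case=> m; case: m => [_ /= ->|[|m]] //.
  + by exists None; rewrite ?inE.
  + move=> _ /= [t [[k [k' [hk ->]]] <-]].
    exists (Some k); first by rewrite inE -hk ltn_ord.
    rewrite /nb /tau (_ : k' = insubd k k.+1) //; apply: val_inj.
    by rewrite val_insubd -hk ltn_ord.
- case=> [[k|]] hD ->; last by exists 0%N.
  rewrite inE in hD.
  exists 1%N => //; exists (tau k * c); split; last by [].
  by exists k, (insubd k k.+1); split; [rewrite val_insubd hD | ].
Qed.

Lemma tau_k {n : nat} {k : 'I_n} : k.+1 < n -> val (tau k k) = k.+1.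
Proof. by move=> h; rewrite /tau tpermL val_insubd h. Qed.

Lemma nb_inj (n : nat) (c : 'S_n) : {in Dset n &, injective (nb c)}.
Proof.
case => [k|] [k'|]; rewrite !inE //= => hk hk'.
- move/mulIg => e. have := tau_k hk; rewrite e /tau.
  case: tpermP => [-> //| e2 | _ _ h]; last by move: h => /= h; lia.
  by move: (congr1 val e2); rewrite val_insubd hk' => /= e3 /= h; lia.
- rewrite -{2}(mul1g c) => /mulIg e. have := tau_k hk; rewrite e perm1 => /= h; lia.
- rewrite -{1}(mul1g c) => /mulIg e. have := tau_k hk'; rewrite -e perm1 => /= h; lia.
Qed.

Local Close Scope group_scope.

Lemma cardsumP (T : finType) (A : {set T}) (P : pred T) :
  #|[set x in A | P x]| = \sum_(x in A) P x.
Proof.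
rewrite -sum1_card (eq_bigl (fun x => (x \in A) && P x)); last by move=> x; rewrite !inE.
by rewrite big_mkcondr; apply: eq_bigr => x _; case: (P x).
Qed.

Lemma count_ident (n : nat) (C Y : {set 'S_n}) : perfect_1code C ->
  #|Y| = \sum_(o in Dset n) #|[set c in C | nb c o \in Y]|.
Proof.
move=> HC.
have one p : #|[set c in C | p \in nb c @: Dset n]| = 1.
  have [c0 [[c0C kc0] uq]] := HC p.
  rewrite (_ : [set c in C | p \in nb c @: Dset n] = [set c0]) ?cards1 //.
  apply/setP => c; rewrite !inE; apply/andP/eqP.
  + move=> [cC /imsetP[o oD ep]]; symmetry; apply: uq; split => //.
    by apply/ball_iff; exists o.
  + move=> ->; split => //; have [o oD ->] := (proj1 (ball_iff _ c0 p) kc0).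
    exact: imset_f.
rewrite -sum1_card.
transitivity (\sum_(p in Y) \sum_(c in C) (p \in nb c @: Dset n) : nat).
  by apply: eq_bigr => p _; rewrite -cardsumP one.
rewrite exchange_big /=.
transitivity (\sum_(c in C) \sum_(o in Dset n) (nb c o \in Y) : nat); last first.
  rewrite exchange_big /=; apply: eq_bigr => o _; by rewrite cardsumP.
apply: eq_bigr => c _.
rewrite -(big_imset (fun p => (p \in Y) : nat) (@nb_inj n c)) /=.
rewrite -!cardsumP; apply: eq_card => p; rewrite !inE; exact: andbC.
Qed.

Definition Acnt {n r : nat} (C : {set 'S_n}) (i : 'I_r -> 'I_n) (f : 'I_r -> 'I_n) :=
  #|[set s in C | [forall l : 'I_r, s (f l) == i l]]|.

Lemma mem_nb {n r : nat} (i : 'I_r -> 'I_n) (f : {ffun 'I_r -> 'I_n}) c o :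
  (nb c o \in [set s : 'S_n | [forall l, s (f l) == i l]]) = [forall l, c (act o f l) == i l].
Proof.
rewrite inE; apply: eq_forallb => l; rewrite ffunE.
by case: o => [k|] //=; rewrite permM.
Qed.

Lemma ident {n r : nat} (C : {set 'S_n}) (i : 'I_r -> 'I_n) (f : {ffun 'I_r -> 'I_n}) :
  perfect_1code C -> injective i -> injective f ->
  (n - r)`! = \sum_(o in Dset n) Acnt C i (act o f).
Proof.
move=> HC hi hf.
rewrite -(@count_fix n r f i hf hi) (@count_ident n C _ HC).
apply: eq_bigr => o _; apply: eq_card => c; rewrite [in LHS]inE mem_nb inE.
by [].
Qed.

Lemma actF {n r : nat} (f : {ffun 'I_r -> 'I_n}) o : injective f -> injective (act o f).
Proof.
move=> hf a b; rewrite !ffunE; case: o => [k|] => [/perm_inj|]; exact: hf.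
Qed.

Lemma act_None {n r : nat} (f : {ffun 'I_r -> 'I_n}) : act None f = f.
Proof. by apply/ffunP => l; rewrite ffunE. Qed.

Lemma S_bound {n r : nat} (f : {ffun 'I_r -> 'I_n}) :
  #|[set o in Dset n | act o f != f]| <= r + r.
Proof.
pose A := (fun l => Some (f l)) @: [set: 'I_r].
pose B := (fun l => Some (insubd (f l) (f l).-1)) @: [set: 'I_r].
have sub : [set o in Dset n | act o f != f] \subset A :|: B.
  apply/subsetP => o; rewrite !inE => /andP[hD H].
  case: o hD H => [k|] hD H; last by rewrite act_None eqxx in H.
  case: (boolP [exists l, act (Some k) f l != f l]) => [/existsP[l hl] | /existsPn h]; last first.
    by exfalso; move/negP: H; apply; apply/eqP/ffunP => l; apply/eqP; move: (h l); rewrite negbK.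
  move: hl; rewrite ffunE /tau; case: tpermP => [e _|e _|]; last by rewrite eqxx.
  - by apply/orP; left; apply/imsetP; exists l; rewrite ?inE // e.
  - apply/orP; right; apply/imsetP; exists l; rewrite ?inE //; congr Some.
    apply: val_inj; rewrite val_insubd e val_insubd hD /=.
    by rewrite (leq_ltn_trans (leqnSn k) hD).
apply: (leq_trans (subset_leq_card sub)); apply: (leq_trans (leq_card_setU _ _)).
by apply: leq_add; apply: (leq_trans (leq_imset_card _ _)); rewrite cardsT card_ord.
Qed.

Lemma card_D (n : nat) : 0 < n -> #|Dset n| = n.
Proof.
case: n => [//|n] _.
have -> : Dset n.+1 = None |: (Some @: [set~ (@ord_max n)]).
  apply/setP => -[k|]; rewrite !inE //=.
  rewrite (mem_imset _ _ (@Some_inj _)) !inE -val_eqE /= ltnS.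
  by rewrite ltn_neqAle -ltnS ltn_ord andbT.
rewrite cardsU1 card_imset; last exact: Some_inj.
rewrite cardsC1 card_ord.
by have -> : (None \in Some @: [set~ (@ord_max n)]) = false by apply/imsetP => -[].
Qed.

Lemma sum_if_card (T : finType) (D : {set T}) (P : pred T) (d : nat) :
  \sum_(o in D) (if P o then d else 0) = #|[set o in D | P o]| * d.
Proof.
rewrite -big_mkcondr /= -sum_nat_const; apply: eq_bigl => o; by rewrite !inE.
Qed.

Theorem theorem3 (n : nat) (C : {set 'S_n}) (r : nat)
    (i : 'I_r -> 'I_n) (j : 'I_r -> 'I_n) :
  11 < n -> perfect_1code C -> 0 < r -> 4 * r < n ->
  injective i -> (forall a b : 'I_r, a < b -> j a < j b) ->
  #|[set s in C | [forall l : 'I_r, s (j l) == i l]]| * n = (n - r)`!.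
Proof.
move=> Hn HC Hr Hrn Hi Hj.
have injj : injective j.
  move=> a b e; have [lt|gt|eq] := ltngtP a b.
  - by move: (Hj _ _ lt); rewrite e ltnn.
  - by move: (Hj _ _ gt); rewrite e ltnn.
  - exact: val_inj.
pose f0 : {ffun 'I_r -> 'I_n} := [ffun l => j l].
pose PF := [pred f : {ffun 'I_r -> 'I_n} | injectiveb f].
have f0F : PF f0 by apply/injectiveP => a b; rewrite !ffunE; exact: injj.
pose A (f : {ffun 'I_r -> 'I_n}) := Acnt C i f.
case: (@arg_maxnP _ f0 PF A f0F) => fM FM maxM.
case: (@arg_minnP _ f0 PF A f0F) => fm Fm minm.
set M := A fM. set m := A fm.
have actPF o f : PF f -> PF (act o f).
  by move=> /injectiveP hf; apply/injectiveP; apply: actF.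
have bnd f : PF f -> m <= A f <= M by move=> hf; apply/andP; split; [exact: minm | exact: maxM].
have nD : #|Dset n| = n by apply: card_D; lia.
have mM : m <= M by have /andP[] := bnd _ FM.
have upper : n * M <= (n - r)`! + (r + r) * (M - m).
  rewrite (ident C i fM HC Hi (injectiveP _ FM)).
  apply: (@leq_trans (\sum_(o in Dset n) A (act o fM) + #|[set o in Dset n | act o fM != fM]| * (M - m))); last first.
    by rewrite leq_add2l leq_mul2r (S_bound fM) orbT.
  rewrite -sum_if_card -big_split /= (_ : n * M = \sum_(o in Dset n) M); last by rewrite sum_nat_const nD.
  apply: leq_sum => o _.
  case: ifP => [_|/negbFE/eqP ->]; last by rewrite addn0.
  have /andP[h1 _] := bnd _ (actPF o _ FM). rewrite /A in h1 *. lia.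
have lower : (n - r)`! <= n * m + (r + r) * (M - m).
  rewrite (ident C i fm HC Hi (injectiveP _ Fm)).
  apply: (@leq_trans (\sum_(o in Dset n) (m + if act o fm != fm then M - m else 0))).
    apply: leq_sum => o _.
    case: ifP => [_|/negbFE/eqP ->]; last by rewrite addn0.
    have /andP[_ h1] := bnd _ (actPF o _ Fm). rewrite /A in h1 *. lia.
  rewrite big_split /= sum_if_card sum_nat_const nD leq_add2l leq_mul2r (S_bound fm) orbT //.
have eMm : M = m.
  apply/eqP; rewrite eqn_leq mM andbT.
  have h : n * (M - m) <= (4 * r) * (M - m) by nia.
  case: (posnP (M - m)) => [e|pos]; first by lia.
  by move: h; rewrite leq_mul2r => h; lia.
have all f : PF f -> A f = M.
  by move=> hf; have /andP[h1 h2] := bnd _ hf; lia.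
rewrite (ident C i f0 HC Hi (injectiveP _ f0F)).
rewrite (eq_bigr (fun _ => M)); last by move=> o _; apply: all; apply: actPF.
rewrite sum_nat_const nD mulnC -(all _ f0F) /A /Acnt.
congr (_ * _); apply: eq_card => s; rewrite !inE; congr (_ && _).
by apply: eq_forallb => l; rewrite ffunE.
Qed.
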